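(* Let $m, n, T$ be positive integers. For each $t \in \{1,\dots,T\}$ let $\mathcal{X}_t = \{ S_t \mid S_t \subseteq [0,1]^m,\ |S_t| = n \}$, and let $\mathcal{X} = \mathcal{X}_1 \times \mathcal{X}_2 \times \cdots \times \mathcal{X}_T$ be the set of point cloud sequences $S = (S_1, \dots, S_T)$ of length $T$. Equip $\mathcal{X}$ with the distance $d_{seq}(S, S') = \max_{t} d_H(S_t, S'_t)$, where $d_H$ is the Hausdorff distance between finite subsets of $[0,1]^m$ (with respect to the Euclidean distance). Suppose $f : \mathcal{X} \to \mathbb{R}$ is continuous with respect to $d_{seq}$, i.e. for every $\epsilon>0$ there is $\delta>0$ such that for all $S, S' \in \mathcal{X}$ with $d_{seq}(S,S') < \delta$ we have $|f(S) - f(S')| < \epsilon$. Then for every $\epsilon > 0$ there exist a positive integer $K$, a function $\zeta : [0,1]^m \times \{1,\dots,T\} \to \mathbb{R}^K$ that is continuous in its first argument, and a continuous function $\gamma : \mathbb{R}^K \to \mathbb{R}$ such that for every $S = (S_1,\dots,S_T) \in \mathcal{X}$, $$\left| f(S) - \gamma\Big( \underset{\mathbf{x} \in S_t,\ t \in \{1,\dots,T\}}{MAX} \{ \zeta(\mathbf{x}, t) \} \Big) \right| < \epsilon,$$ where $MAX$ denotes the element-wise (coordinate-wise) maximum of a finite set of vectors in $\mathbb{R}^K$.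
   Context: The Hausdorff distance between finite sets $A, B \subseteq [0,1]^m$ is $d_H(A,B) = \max\{\sup_{a\in A}\inf_{b\in B}\|a-b\|, \sup_{b\in B}\inf_{a\in A}\|a-b\|\}$. The maximum in the displayed formula is taken over all pairs $(\mathbf{x}, t)$ with $t \in \{1,\dots,T\}$ and $\mathbf{x}$ a point of the $t$-th frame $S_t$. *)

(* Defs.v *)
From HB Require Import structures.
From mathcomp Require Import all_boot all_order all_algebra.
From mathcomp Require Import finmap.
From mathcomp Require Import all_classical all_reals all_analysis.
Set Implicit Arguments. Unset Strict Implicit. Unset Printing Implicit Defensive.
Import Order.TTheory GRing.Theory Num.Theory.
Import numFieldTopology.Exports numFieldNormedType.Exports.
Local Open Scope classical_set_scope.
Local Open Scope ring_scope.
Local Open Scope fset_scope.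

Definition cube (R : realType) (m : nat) : set 'rV[R]_m :=
  [set x | forall i : 'I_m, 0 <= x ord0 i <= 1].

Definition edist (R : realType) (m : nat) (x y : 'rV[R]_m) : R :=
  Num.sqrt (\sum_(i < m) (x ord0 i - y ord0 i) ^+ 2).

Definition hausdorff (R : realType) (m : nat) (A B : {fset 'rV[R]_m}) : R :=
  Num.max
    (sup [set inf [set edist a b | b in [set b | b \in B]] | a in [set a | a \in A]])
    (sup [set inf [set edist a b | a in [set a | a \in A]] | b in [set b | b \in B]]).

Definition pc_seq (R : realType) (m n T : nat) (S : 'I_T -> {fset 'rV[R]_m}) : Prop :=
  forall t : 'I_T, #|` S t| = n /\ forall x, x \in S t -> @cube R m x.

Definition dseq (R : realType) (m T : nat) (S S' : 'I_T -> {fset 'rV[R]_m}) : R :=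
  \big[Num.max/0]_(t < T) hausdorff (S t) (S' t).

Definition MAX (R : realType) (m T K : nat) (zeta : 'rV[R]_m -> 'I_T -> 'rV[R]_K)
  (S : 'I_T -> {fset 'rV[R]_m}) : 'rV[R]_K :=
  \row_(k < K) sup [set r : R | exists (t : 'I_T) (x : 'rV[R]_m), x \in S t /\ r = zeta x t ord0 k].

(* Main.v *)
Require Import Defs.
From HB Require Import structures.
From mathcomp Require Import all_boot all_order all_algebra.
From mathcomp Require Import finmap.
From mathcomp Require Import all_classical all_reals all_analysis.
From mathcomp Require Import lra.
Import Order.TTheory GRing.Theory Num.Theory.
Import numFieldTopology.Exports numFieldNormedType.Exports.
Local Open Scope classical_set_scope.
Local Open Scope ring_scope.
Set Implicit Arguments. Unset Strict Implicit.

Section Helpers.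
Variable R : realType.

Definition d1 (m : nat) (x y : 'rV[R]_m) : R := \sum_(i < m) `|x ord0 i - y ord0 i|.


Lemma d1_ge0 m (x y : 'rV[R]_m) : 0 <= d1 x y.
Proof. by apply: sumr_ge0 => i _. Qed.

Lemma d1C m (x y : 'rV[R]_m) : d1 x y = d1 y x.
Proof. by apply: eq_bigr => i _; rewrite distrC. Qed.

Lemma d1_tri m (x y z : 'rV[R]_m) : d1 x z <= d1 x y + d1 y z.
Proof.
rewrite /d1 -big_split /=; apply: ler_sum => i _.
by rewrite (le_trans _ (ler_normD _ _)) // addrA subrK.
Qed.

Lemma sq_sum_le m (F : 'I_m -> R) :
  \sum_(i < m) F i ^+ 2 <= (\sum_(i < m) `|F i|) ^+ 2.
Proof.
pose P (y1 y2 : R) := 0 <= y2 /\ y1 <= y2 ^+ 2.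
have : P (\sum_(i < m) F i ^+ 2) (\sum_(i < m) `|F i|).
  apply: (big_rec2 P); first by rewrite /P expr0n /=.
  move=> i y1 y2 _ [h1 h2]; split; first by rewrite addr_ge0.
  rewrite sqrrD -real_normK ?num_real //.
  have : 0 <= `|F i| * y2 *+ 2 by rewrite mulrn_wge0 // mulr_ge0.
  by move=> h; lra.
by case.
Qed.

Lemma edist_le_d1 m (x y : 'rV[R]_m) : Defs.edist x y <= d1 x y.
Proof.
rewrite /edist -(ger0_norm (d1_ge0 x y)) -sqrtr_sqr ler_sqrt ?exprn_ge0 //.
exact: sq_sum_le.
exact: d1_ge0.
Qed.

Lemma edist_ge0 m (x y : 'rV[R]_m) : 0 <= Defs.edist x y.
Proof. exact: sqrtr_ge0. Qed.

Lemma half_le (m : nat) (A B : {fset 'rV[R]_m}) (D : 'rV[R]_m -> 'rV[R]_m -> R) (r : R) :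
  (exists a, a \in A) ->
  (forall a b, 0 <= D a b) ->
  (forall a, a \in A -> exists2 b, b \in B & D a b <= r) ->
  sup [set inf [set D a b | b in [set b | b \in B]] | a in [set a | a \in A]] <= r.
Proof.
move=> [a0 a0A] D0 H.
apply: ge_sup; first by exists (inf [set D a0 b | b in [set b | b \in B]]); exists a0.
move=> _ [a aA <-]; have [b bB hb] := H a aA.
apply: le_trans hb; apply: ge_inf; last by exists b.
by exists 0 => _ [b' _ <-].
Qed.

Lemma hausdorff_le m (A B : {fset 'rV[R]_m}) r :
  (exists a, a \in A) -> (exists b, b \in B) ->
  (forall a, a \in A -> exists2 b, b \in B & d1 a b <= r) ->
  (forall b, b \in B -> exists2 a, a \in A & d1 a b <= r) ->
  hausdorff A B <= r.
Proof.
move=> nA nB hA hB; rewrite /hausdorff ge_max; apply/andP; split.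
  apply: half_le => //; first exact: edist_ge0.
  by move=> a /hA [b bB h]; exists b => //; exact: le_trans (edist_le_d1 _ _) h.
apply: (@half_le m B A (fun b a => Defs.edist a b)) => //; first by move=> ? ? /=; exact: edist_ge0.
by move=> b /hB [a aA h]; exists a => //; exact: le_trans (edist_le_d1 _ _) h.
Qed.

Lemma dseq_le m T (S S' : 'I_T -> {fset 'rV[R]_m}) r : 0 <= r ->
  (forall t, exists a, a \in S t) -> (forall t, exists b, b \in S' t) ->
  (forall t a, a \in S t -> exists2 b, b \in S' t & d1 a b <= r) ->
  (forall t b, b \in S' t -> exists2 a, a \in S t & d1 a b <= r) ->
  dseq S S' <= r.
Proof.
move=> r0 nS nS' h1 h2; rewrite /dseq; apply: bigmax_le => // t _.
apply: hausdorff_le; [exact: nS|exact: nS'|exact: h1|exact: h2].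
Qed.


Definition gp m N (c : 'rV['I_N.+1]_m) : 'rV[R]_m := \row_i ((c ord0 i : nat)%:R / N%:R).
Definition qg m N (x : 'rV[R]_m) : 'rV['I_N.+1]_m :=
  \row_i inord (Num.truncn (x ord0 i * N%:R)).

Lemma q_close m N (x : 'rV[R]_m) : (0 < N)%N -> cube x ->
  d1 x (gp (qg N x)) <= m%:R / N%:R.
Proof.
move=> N0 cx.
have Nr : 0 < N%:R :> R by rewrite ltr0n.
rewrite (_ : m%:R / N%:R = \sum_(i < m) N%:R^-1); last first.
  by rewrite sumr_const card_ord mulr_natl.
rewrite /d1; apply: ler_sum => i _.
rewrite !mxE.
have [x0 x1] : 0 <= x ord0 i /\ x ord0 i <= 1 by move: (cx i) => /andP.
have xN0 : 0 <= x ord0 i * N%:R by rewrite mulr_ge0 // ltW.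
have /andP[lo hi] := truncn_itv xN0.
have kN : (Num.truncn (x ord0 i * N%:R) < N.+1)%N.
  rewrite ltnS truncn_le_nat; apply: (le_lt_trans (y := N%:R)).
    by rewrite -[X in _ <= X]mul1r ler_wpM2r // ltW.
  by rewrite ltr_nat.
rewrite inordK //.
set k := Num.truncn _ in lo hi kN *.
have h1 : k%:R / N%:R <= x ord0 i by rewrite ler_pdivrMr.
have h2 : x ord0 i <= k%:R / N%:R + N%:R^-1.
  rewrite -[X in _ + X]mul1r -mulrDl ler_pdivlMr // natr1 ltW //.
rewrite ler_norml; apply/andP; split; lra.
Qed.


Lemma pc_ne m n T (S : 'I_T -> {fset 'rV[R]_m}) : (0 < n)%N -> pc_seq n S ->
  forall t, exists a, a \in S t.
Proof.
by move=> n0 hS t; have [c _] := hS t; apply/fset0Pn; rewrite -cardfs_gt0 c.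
Qed.

Lemma q_same m N (a b : 'rV[R]_m) : (0 < N)%N -> cube a -> cube b ->
  qg N a = qg N b -> d1 a b <= 2 * (m%:R / N%:R).
Proof.
move=> N0 ca cb e.
apply: le_trans (d1_tri a (gp (qg N a)) b) _.
rewrite mulr2n mulrDl mul1r; apply: lerD; first exact: q_close.
by rewrite e d1C; exact: q_close.
Qed.

Lemma exN (c d : R) : 0 < d -> exists N : nat, (0 < N)%N /\ c / N%:R < d.
Proof.
move=> d0; exists (Num.truncn (c / d)).+1; split => //.
have h := truncnS_gt (c / d).
rewrite ltr_pdivrMr ?ltr0n // mulrC -ltr_pdivrMr //.
Qed.

Lemma f_bounded m n T (f : ('I_T -> {fset 'rV[R]_m}) -> R) : (0 < n)%N ->
  (forall eps : R, 0 < eps -> exists2 delta : R, 0 < delta &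
     forall S S', pc_seq n S -> pc_seq n S' -> dseq S S' < delta ->
       `|f S - f S'| < eps) ->
  exists B : R, 0 < B /\ forall S, pc_seq n S -> `|f S| <= B.
Proof.
move=> n0 hf.
have [d d0 hd] := hf 1 ltr01.
have [N [N0 hN]] := exN (2 * m%:R) d0.
pose Qf (S : 'I_T -> {fset 'rV[R]_m}) : {ffun 'I_T -> {set 'rV['I_N.+1]_m}} :=
  [ffun t => finset (fun c => `[< exists2 x, x \in S t & qg N x = c >])].
have H : forall Q, exists u : R, forall S, pc_seq n S -> Qf S = Q -> `|f S| <= u.
  move=> Q; case: (pselect (exists S0, pc_seq n S0 /\ Qf S0 = Q)); last first.
    by move=> nQ; exists 0 => S pS eS; exfalso; apply: nQ; exists S.
  move=> [S0 [p0 e0]]; exists (`|f S0| + 1) => S pS eS.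
  have eQ : Qf S = Qf S0 by rewrite eS e0.
  have hfS : `|f S - f S0| < 1.
    apply: hd => //; apply: le_lt_trans hN; rewrite -mulrA.
    apply: dseq_le.
    - by rewrite mulr_ge0 // divr_ge0.
    - exact: pc_ne pS.
    - exact: pc_ne p0.
    - move=> t a aS.
      have : qg N a \in Qf S t by rewrite ffunE inE; apply/asboolP; exists a.
      rewrite eQ ffunE inE => /asboolP [b bS eb]; exists b => //.
      by apply: (q_same N0 (proj2 (pS t) a aS) (proj2 (p0 t) b bS)); rewrite eb.
    - move=> t b bS.
      have : qg N b \in Qf S0 t by rewrite ffunE inE; apply/asboolP; exists b.
      rewrite -eQ ffunE inE => /asboolP [a aS ea]; exists a => //.
      by apply: (q_same N0 (proj2 (pS t) a aS) (proj2 (p0 t) b bS)); rewrite ea.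
  have := ler_normD (f S - f S0) (f S0); rewrite subrK => h.
  apply: le_trans h _; have := ltW hfS; lra.
have [u hu] := fin_all_exists H.
exists (\big[Num.max/0]_Q `|u Q| + 1); split.
  apply: ltr_wpDl; last exact: ltr01.
  by elim/big_ind: _ => // x y hx hy; rewrite le_max hx.
move=> S pS; apply: le_trans (hu (Qf S) S pS erefl) _.
apply: le_trans (ler_norm _) _.
apply: (le_trans (y := \big[Num.max/0]_Q `|u Q|)); first exact: le_bigmax.
by rewrite lerDl.
Qed.


Definition Idx m N T := ('I_T * 'rV['I_N.+1]_m)%type.

Definition zeta m N T (x : 'rV[R]_m) (t : 'I_T) : 'rV[R]_#|{: Idx m N T}| :=
  \row_k (if (enum_val k).1 == t then - d1 x (gp (enum_val k).2) else - (m.+1)%:R).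

Lemma MAX_ge m N T (S : 'I_T -> {fset 'rV[R]_m}) t c a : a \in S t ->
  - d1 a (gp c) <= MAX (@zeta m N T) S ord0 (enum_rank (t, c)).
Proof.
move=> aS; rewrite /MAX mxE; apply: ub_le_sup.
  exists 0; move=> r [t' [x [_ ->]]]; rewrite mxE.
  by case: ifP => _; rewrite oppr_le0 ?d1_ge0 ?ler0n.
by exists t, a; split => //; rewrite mxE enum_rankK /= eqxx.
Qed.

Lemma MAX_lt m N T (S : 'I_T -> {fset 'rV[R]_m}) t c (rho : R) :
  (exists a, a \in S t) -> rho <= (m.+1)%:R ->
  - rho < MAX (@zeta m N T) S ord0 (enum_rank (t, c)) ->
  exists2 b, b \in S t & d1 b (gp c) < rho.
Proof.
move=> [a aS] hr H.
case: (pselect (exists2 b, b \in S t & d1 b (gp c) < rho)) => // nb.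
exfalso; move: H; apply/negP; rewrite -leNgt /MAX mxE.
apply: ge_sup.
  by exists (@zeta m N T a t ord0 (enum_rank (t, c))); exists t, a.
move=> r [t' [x [xS ->]]]; rewrite mxE enum_rankK /=.
case: eqP => [e|_]; last by rewrite lerN2.
subst t'; rewrite lerN2 leNgt; apply/negP => h; apply: nb; exists x => //.
Qed.

Lemma coord_le K (v : 'rV[R]_K) k : `|v ord0 k| <= `|v|.
Proof.
have -> : `|v| = mx_norm v by [].
rewrite mx_normrE; exact: (le_bigmax _ (fun ij : 'I_1 * 'I_K => `|v ij.1 ij.2|) (ord0, k)).
Qed.

Lemma norm_le K (v : 'rV[R]_K) r : 0 <= r -> (forall k, `|v ord0 k| <= r) -> `|v| <= r.
Proof.
move=> r0 h; have -> : `|v| = mx_norm v by [].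
rewrite mx_normrE; apply: bigmax_le => // [[i k]] _ /=.
by rewrite (ord1 i).
Qed.

Lemma d1_lip m (x y : 'rV[R]_m) : d1 x y <= m%:R * `|x - y|.
Proof.
rewrite (_ : m%:R * `|x - y| = \sum_(i < m) `|x - y|); last first.
  by rewrite sumr_const card_ord mulr_natl.
apply: ler_sum => i _.
by rewrite (_ : x ord0 i - y ord0 i = (x - y) ord0 i) ?coord_le // !mxE.
Qed.

Lemma d1_diff m (x y c : 'rV[R]_m) : `|d1 x c - d1 y c| <= d1 x y.
Proof.
have h1 := d1_tri x y c; have h2 := d1_tri y x c; rewrite (d1C y x) in h2.
rewrite ler_norml; apply/andP; split; lra.
Qed.

Lemma lip_cont (V W : normedModType R) (g : V -> W) (C : R) :
  0 < C -> (forall x y, `|g x - g y| <= C * `|x - y|) -> continuous g.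
Proof.
move=> C0 hg x; apply/cvgrPdist_lt => e e0.
have ec : 0 < e / C by rewrite divr_gt0.
near=> y.
apply: (le_lt_trans (hg x y)).
rewrite -ltr_pdivlMl // mulrC.
near: y.
apply/nbhs_normP; exists (e / C) => //=.
Unshelve. all: by end_near. Qed.

Lemma zeta_cont m N T t : continuous (fun x => @zeta m N T x t).
Proof.
apply: (@lip_cont _ _ _ (m%:R + 1)); first by rewrite ltr_wpDl.
move=> x y; apply: norm_le; first by rewrite mulr_ge0 // ltr_wpDl.
move=> k; rewrite !mxE; case: ifP => _; last first.
  by rewrite subrr normr0 mulr_ge0 // ltr_wpDl.
rewrite opprK addrC distrC; apply: le_trans (d1_diff _ _ _) _.
apply: le_trans (d1_lip x y) _; rewrite ler_wpM2r // lerDl //.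
Qed.


Lemma d1_term K (v w : 'rV[R]_K) k : `|v ord0 k - w ord0 k| <= d1 v w.
Proof. by rewrite /d1 (bigD1 k) //= lerDl sumr_ge0. Qed.

Lemma d1_xx K (v : 'rV[R]_K) : d1 v v = 0.
Proof. by rewrite /d1 big1 // => i _; rewrite subrr normr0. Qed.

Lemma V_close m N T n (S S' : 'I_T -> {fset 'rV[R]_m}) :
  (0 < N)%N -> (0 < n)%N -> pc_seq n S -> pc_seq n S' ->
  2 * (m%:R / N%:R) <= (m.+1)%:R :> R ->
  (forall k, `|MAX (@zeta m N T) S ord0 k - MAX (@zeta m N T) S' ord0 k| < m%:R / N%:R) ->
  forall t a, a \in S t -> exists2 b, b \in S' t & d1 a b <= 3 * (m%:R / N%:R).
Proof.
move=> N0 n0 pS pS' h2 H t a aS.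
set h := m%:R / N%:R in h2 H *.
set c := qg N a.
have hq : d1 a (gp c) <= h := q_close N0 (proj2 (pS t) a aS).
have hg : - d1 a (gp c) <= MAX (@zeta m N T) S ord0 (enum_rank (t, c)) by apply: MAX_ge.
have hk := H (enum_rank (t, c)).
have : - (2 * h) < MAX (@zeta m N T) S' ord0 (enum_rank (t, c)).
  move: hk; rewrite ltr_norml => /andP[hk1 hk2]; lra.
case/(MAX_lt (pc_ne n0 pS' t) h2) => b bS hb; exists b => //.
have := d1_tri a (gp c) b; rewrite (d1C (gp c) b); lra.
Qed.

Lemma dseq_close m N T n (S S' : 'I_T -> {fset 'rV[R]_m}) :
  (0 < N)%N -> (0 < n)%N -> pc_seq n S -> pc_seq n S' ->
  2 * (m%:R / N%:R) <= (m.+1)%:R :> R ->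
  (forall k, `|MAX (@zeta m N T) S ord0 k - MAX (@zeta m N T) S' ord0 k| < m%:R / N%:R) ->
  dseq S S' <= 3 * (m%:R / N%:R).
Proof.
move=> N0 n0 pS pS' h2 H.
apply: dseq_le.
- by rewrite mulr_ge0 // divr_ge0.
- exact: pc_ne pS.
- exact: pc_ne pS'.
- exact: (V_close N0 n0 pS pS' h2 H).
- move=> t b bS.
  have [a aS hab] := V_close N0 n0 pS' pS h2 (fun k => ltac:(rewrite distrC; exact: H k)) bS.
  by exists a => //; rewrite d1C.
Qed.

End Helpers.

Unset Implicit Arguments.

Theorem theorem1 (R : realType) (m n T : nat)
  (hm : (0 < m)%N) (hn : (0 < n)%N) (hT : (0 < T)%N)
  (f : ('I_T -> {fset 'rV[R]_m}) -> R)
  (hf : forall eps : R, 0 < eps -> exists2 delta : R, 0 < delta &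
     forall S S', pc_seq n S -> pc_seq n S' -> dseq S S' < delta ->
       `|f S - f S'| < eps) :
  forall eps : R, 0 < eps ->
  exists K : nat, (0 < K)%N /\
  exists (zeta : 'rV[R]_m -> 'I_T -> 'rV[R]_K) (gamma : 'rV[R]_K -> R),
    (forall t : 'I_T, {within @cube R m, continuous (fun x => zeta x t)}) /\
    continuous gamma /\
    forall S, pc_seq n S -> `|f S - gamma (MAX zeta S)| < eps.
Proof.
move=> eps e0.
have [B [B0 hB]] := f_bounded hn hf.
have e2 : 0 < eps / 2 by rewrite divr_gt0.
have [d d0 hd] := hf _ e2.
have md0 : 0 < Num.min d 1 by rewrite lt_min d0 ltr01.
have [N [N0 hN]] := exN (3 * m%:R) md0.
move: hN; rewrite lt_min => /andP[hNd hN1].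
set h := (m%:R / N%:R : R).
have h0 : 0 < h by rewrite divr_gt0 ?ltr0n.
have h3d : 3 * h < d by rewrite /h mulrA.
have h31 : 3 * h < 1 by rewrite /h mulrA.
have m1 : 1 <= (m.+1)%:R :> R by rewrite ler1n.
have h2 : 2 * h <= (m.+1)%:R by lra.
pose K := #|{: Idx m N T}|.
exists K; split.
  by apply/card_gt0P; exists (Ordinal hT, const_mx ord0).
pose vS (S : 'I_T -> {fset 'rV[R]_m}) := MAX (@zeta R m N T) S.
pose L := 2 * B / h.
have L0 : 0 <= L by rewrite /L divr_ge0 // mulr_ge0 // ltW.
pose E (v : 'rV[R]_K) := [set y | exists2 S, pc_seq n S & y = f S + L * d1 v (vS S)].
have lbE : forall v, has_lbound (E v).
  move=> v; exists (- B) => _ [S pS ->].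
  have := hB S pS; rewrite ler_norml => /andP[hb1 _].
  have : 0 <= L * d1 v (vS S) by rewrite mulr_ge0 // d1_ge0.
  lra.
pose gamma v := inf (E v).
have key : forall v w, gamma v - L * d1 v w <= gamma w.
  move=> v w; case: (pselect (exists S : 'I_T -> {fset 'rV[R]_m}, pc_seq n S)) => [[S0 p0]|nS]; last first.
    have Ee : forall u, E u = set0.
      by move=> u; apply/seteqP; split => // y [S pS _]; apply: nS; exists S.
    rewrite /gamma !Ee inf0; have : 0 <= L * d1 v w by rewrite mulr_ge0 // d1_ge0.
    lra.
  apply: (@lb_le_inf _ (E w)); first by exists (f S0 + L * d1 w (vS S0)); exists S0.
  move=> _ [S pS ->].
  have hi := ge_inf (lbE v) (ltac:(by exists S) : E v (f S + L * d1 v (vS S))).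
  have ht := d1_tri v w (vS S).
  have := ler_wpM2l L0 ht; rewrite mulrDr.
  move: hi; rewrite /gamma; lra.
exists (fun x t => @zeta R m N T x t), gamma.
split.
  by move=> t; apply: continuous_subspaceT; exact: zeta_cont.
split.
  apply: (@lip_cont R _ _ gamma (L * K%:R + 1)).
    by rewrite ltr_wpDl // mulr_ge0.
  move=> v w.
  have k1 := key v w; have k2 := key w v; rewrite d1C in k2.
  have hl := d1_lip v w.
  have : L * d1 v w <= L * K%:R * `|v - w| by rewrite -mulrA ler_wpM2l.
  have : 0 <= `|v - w| by [].
  move=> hvw hL.
  rewrite ler_norml; apply/andP; split.
    nra.
  nra.
move=> S pS.
have up : gamma (vS S) <= f S.
  have := ge_inf (lbE (vS S)) (ltac:(by exists S) : E (vS S) (f S + L * d1 (vS S) (vS S))).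
  by rewrite d1_xx mulr0 addr0.
have lo : f S - eps / 2 <= gamma (vS S).
  apply: (@lb_le_inf _ (E (vS S))); first by exists (f S + L * d1 (vS S) (vS S)); exists S.
  move=> _ [S' pS' ->].
  have dL : 0 <= L * d1 (vS S) (vS S') by rewrite mulr_ge0 // d1_ge0.
  case: (boolP [forall k, `|vS S ord0 k - vS S' ord0 k| < h]).
    move=> /forallP H.
    have hds : dseq S S' < d.
      apply: le_lt_trans h3d; exact: (dseq_close N0 hn pS pS' h2 H).
    have := hd S S' pS pS' hds; rewrite ltr_norml => /andP[_ hf2].
    lra.
  move=> /forallPn [k]; rewrite -leNgt => Hk.
  have hk := d1_term (vS S) (vS S') k.
  have hLh : L * h = 2 * B by rewrite /L divfK // gt_eqF.
  have : L * h <= L * d1 (vS S) (vS S') by rewrite ler_wpM2l // (le_trans Hk).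
  have := hB S pS; have := hB S' pS'; rewrite !ler_norml => /andP[a1 a2] /andP[b1 b2].
  lra.
rewrite ltr_norml; apply/andP; split; lra.
Qed.
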